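(* If a Banach space $Y$ contains a strictly convex subspace $Z$ with $\dim Z>1$, then $Y$ satisfies property (AGR): there exists a Borel measurable map $F:[0,1]\to S_Y$ such that for each $y^*\in S_{Y^*}$ we have $|y^*(F(t))|<1$ for Lebesgue-almost all $t\in[0,1]$.
   Context: Scalars may be real or complex. A normed space is strictly convex if its unit sphere contains no nontrivial line segments. *)

(* Defs.v *)
From HB Require Import structures.
From mathcomp Require Import all_boot all_order all_algebra.
From mathcomp Require Export complex.
From mathcomp Require Export all_classical all_reals all_analysis.
Import Order.TTheory GRing.Theory Num.Theory.
Import numFieldNormedType.Exports.
Set Implicit Arguments. Unset Strict Implicit. Unset Printing Implicit Defensive.
Local Open Scope classical_set_scope.
Local Open Scope ring_scope.

Section Defs.
Variable K : numFieldType.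
Variable Y : normedModType K.

Definition lin_subspace (Z : set Y) : Prop :=
  Z 0 /\ (forall (a : K) (x y : Y), Z x -> Z y -> Z (a *: x + y)).

Definition dim_gt1 (Z : set Y) : Prop :=
  exists x y : Y, Z x /\ Z y /\
    (forall a b : K, a *: x + b *: y = 0 -> a = 0 /\ b = 0).

Definition strictly_convex_sub (Z : set Y) : Prop :=
  forall x y : Y, Z x -> Z y -> `|x| = 1 -> `|y| = 1 -> x <> y ->
    ~ (forall t : K, 0 <= t <= 1 -> `|(1 - t) *: x + t *: y| = 1).

(* y^* is an element of S_{Y^*}: a linear functional of norm exactly 1,
   the norm being sup_{|y| <= 1} |y^*(y)| *)
Definition dual_unit_sphere (f : Y -> K) : Prop :=
  (forall (a : K) (x y : Y), f (a *: x + y) = a * f x + f y) /\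
  (forall y : Y, `|f y| <= `|y|) /\
  (forall e : K, 0 < e -> exists y : Y, `|y| <= 1 /\ 1 - e < `|f y|).

Definition borel_meas_on01 (R : realType) (F : R -> Y) : Prop :=
  forall U : set Y, open U ->
    measurable ([set t : R | 0 <= t <= 1] `&` (F @^-1` U)).

Definition AGR (R : realType) : Prop :=
  exists F : R -> Y,
    borel_meas_on01 F /\
    (forall t : R, 0 <= t <= 1 -> `|F t| = 1) /\
    (forall f : Y -> K, dual_unit_sphere f ->
       {ae (@lebesgue_measure R), forall t : R, 0 <= t <= 1 -> `|f (F t)| < 1}).
End Defs.

(* Main.v *)
Require Import Defs.
From HB Require Import structures.
From mathcomp Require Import all_boot all_order all_algebra.
From mathcomp Require Import complex.
From mathcomp Require Import all_classical all_reals all_analysis.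
From mathcomp Require Import measurable_realfun ring.
Import Order.TTheory GRing.Theory Num.Theory.
Import numFieldNormedType.Exports.
Local Open Scope classical_set_scope.
Local Open Scope ring_scope.
Set Implicit Arguments. Unset Strict Implicit.

Section Generic.
Variables (R : realType) (K : numFieldType) (Y : normedModType K).
Variable iota : R -> K.
Hypothesis iota_inj : injective iota.
Hypothesis iota_cont : continuous iota.

Lemma lin0 (f : Y -> K) : (forall (a : K) (x y : Y), f (a *: x + y) = a * f x + f y) -> f 0 = 0.
Proof.
move=> fl; have := fl 1 0 0; rewrite scaler0 addr0 mul1r => h.
by have := congr1 (fun z => z - f 0) h; rewrite subrr addrK => e; rewrite -e.
Qed.

Lemma linZ (f : Y -> K) : (forall (a : K) (x y : Y), f (a *: x + y) = a * f x + f y) ->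
  forall a x, f (a *: x) = a * f x.
Proof. by move=> fl a x; have := fl a x 0; rewrite addr0 (lin0 fl) addr0. Qed.

Lemma linD (f : Y -> K) : (forall (a : K) (x y : Y), f (a *: x + y) = a * f x + f y) ->
  forall x y, f (x + y) = f x + f y.
Proof. by move=> fl x y; have := fl 1 x y; rewrite scale1r mul1r. Qed.

Lemma subZ (Z : set Y) : lin_subspace Z -> forall a x, Z x -> Z (a *: x).
Proof. by move=> [Z0 Zl] a x Zx; have := Zl a x 0 Zx Z0; rewrite addr0. Qed.

Lemma subD (Z : set Y) : lin_subspace Z -> forall x y, Z x -> Z y -> Z (x + y).
Proof. by move=> [Z0 Zl] x y Zx Zy; have := Zl 1 x y Zx Zy; rewrite scale1r. Qed.

Lemma sc_uniq (Z : set Y) (f : Y -> K) : strictly_convex_sub Z -> dual_unit_sphere f ->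
  forall u v, Z u -> Z v -> `|u| = 1 -> `|v| = 1 -> f u = 1 -> f v = 1 -> u = v.
Proof.
move=> sc [fl [fb _]] u v Zu Zv nu nv fu fv.
apply: contrapT => uv; apply: (sc u v Zu Zv nu nv uv) => t /andP[t0 t1].
apply/eqP; rewrite eq_le; apply/andP; split.
  apply: (le_trans (ler_normD _ _)); rewrite !normrZ nu nv !mulr1.
  rewrite (ger0_norm t0) ger0_norm ?subr_ge0 // subrK //.
have h : `|f ((1 - t) *: u + t *: v)| = 1.
  by rewrite linD // !linZ // fu fv !mulr1 subrK normr1.
by rewrite -[X in X <= _]h; exact: fb.
Qed.

Theorem generic_AGR (Z : set Y) : lin_subspace Z -> dim_gt1 Z -> strictly_convex_sub Z ->
  AGR Y R.
Proof.
move=> lZ [x [y [Zx [Zy ind]]]] sc.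
pose G t := (1 - iota t) *: x + iota t *: y.
have Gnz t : G t != 0.
  apply/eqP => /ind [h1 h2]; move: h1; rewrite h2 subr0 => /eqP; rewrite oner_eq0 //.
have nGnz t : `|G t| != 0 by rewrite normr_eq0.
pose F t := `|G t|^-1 *: G t.
have normF t : `|F t| = 1.
  by rewrite normrZ ger0_norm ?invr_ge0 // mulVf.
have ZF t : Z (F t).
  by apply: subZ => //; apply: subD => //; apply: subZ.
have Gcont : continuous G.
  move=> t; apply: (@continuousD _ _ _ (fun t => (1 - iota t) *: x) (fun t => iota t *: y));
    apply: continuousZr_tmp; [apply: cvgB; [exact: cvg_cst|exact: iota_cont]|exact: iota_cont].
have Fcont : continuous F.
  move=> t; apply: (@continuousZ _ _ _ (fun t => `|G t|^-1) G); last exact: Gcont.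
  apply: continuousV; first exact: nGnz.
  exact: (continuous_comp (Gcont t) (@norm_continuous _ _ _)).
exists F; split; [|split].
- move=> U oU.
  have -> : [set t : R | 0 <= t <= 1] = `[0, 1]%classic.
    by apply/seteqP; split => t /=; rewrite in_itv.
  apply: measurableI; first exact: measurable_itv.
  apply: open_measurable; apply: open_comp => // t _; exact: Fcont.
- by move=> t _; exact: normF.
move=> f fd; have [fl [fb _]] := fd.
have key t s : `|f (F t)| = 1 -> `|f (F s)| = 1 -> t = s.
  move=> ht hs.
  have ct : f (F t) != 0 by rewrite -normr_eq0 ht oner_eq0.
  have cs : f (F s) != 0 by rewrite -normr_eq0 hs oner_eq0.
  have E := sc_uniq sc fd (subZ lZ (f (F t))^-1 (ZF t)) (subZ lZ (f (F s))^-1 (ZF s)).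
  have nV (c : K) (w : Y) : `|w| = 1 -> `|c| = 1 -> `|c^-1 *: w| = 1.
    by move=> hw hc; rewrite normrZ hw mulr1 normfV hc invr1.
  have fV (w : Y) : f w != 0 -> f ((f w)^-1 *: w) = 1.
    by move=> hw; rewrite linZ // mulVf.
  move: (E (nV _ _ (normF t) ht) (nV _ _ (normF s) hs) (fV _ ct) (fV _ cs)).
  rewrite /F !scalerA.
  set a := _ * _; set b := _ * _ => eab.
  have a0 : a != 0 by rewrite mulf_neq0 // ?invr_eq0.
  have : (a * (1 - iota t) - b * (1 - iota s)) *: x + (a * iota t - b * iota s) *: y = 0.
    apply/eqP; rewrite -subr_eq0 subr0; apply/eqP.
    have : a *: G t - b *: G s = 0 by rewrite eab subrr.
    rewrite /G !scalerDr !scalerA => <-.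
    by rewrite !scalerBl addrACA -opprD.
   
  move=> /ind [h1 h2].
  have ab : a = b.
    apply/eqP; rewrite -subr_eq0; apply/eqP.
    have -> : a - b = (a * (1 - iota t) - b * (1 - iota s)) + (a * iota t - b * iota s) by ring.
    by rewrite h1 h2 addr0.
  move: h2; rewrite ab -mulrBr => /eqP; rewrite mulf_eq0 -ab (negPf a0) /= subr_eq0.
  by move=> /eqP /iota_inj.
have fle t : `|f (F t)| <= 1 by rewrite -(normF t); exact: fb.
have bad t : ~ (0 <= t <= 1 -> `|f (F t)| < 1) -> `|f (F t)| = 1.
  move=> h; apply/eqP; rewrite eq_le fle /= real_leNgt ?realE ?normr_ge0 ?ler01 //.
  by apply/negP => lt1; apply: h => _.
case: (pselect (exists t0, ~ (0 <= t0 <= 1 -> `|f (F t0)| < 1))) => [[t0 bt0]|nb].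
- exists [set t0]; split; [exact: measurable_set1|exact: lebesgue_measure_set1|].
  by move=> t /= bt; exact: key (bad _ bt) (bad _ bt0).
- exists set0; split; [exact: measurable0|exact: measure0|].
  by move=> t /= bt; apply: nb; exists t.
Qed.
End Generic.

Definition RCK (R : realType) : numFieldType := R[i].
Definition RC (R : realType) (t : R) : RCK R := (t%:C)%C.
Lemma RC_cont (R : realType) : continuous (@RC R).
Proof.
rewrite /RC /RCK.
move=> t; apply/cvgrPdist_lt => e e0.
have er : e \is Num.real by exact: gtr0_real.
have e' : 0 < complex.Re e by rewrite -ltcR (RRe_real er).
near=> s.
rewrite -(RRe_real er) -rmorphB normc_def /= expr0n /= addr0 sqrtr_sqr ltcR.
near: s.

by move: (@cvg_id _ (nbhs t)) => /cvgrPdist_lt /(_ _ e').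
Unshelve. all: by end_near.
Qed.

Unset Implicit Arguments. Set Strict Implicit.
Local Open Scope complex_scope.

Theorem lemma4p10 (R : realType) :
  (forall (Y : completeNormedModType R) (Z : set Y),
      closed Z -> lin_subspace Z -> dim_gt1 Z -> strictly_convex_sub Z ->
      AGR Y R) /\
  (forall (Y : completeNormedModType R[i]) (Z : set Y),
      closed Z -> lin_subspace Z -> dim_gt1 Z -> strictly_convex_sub Z ->
      AGR Y R).
Proof.
split=> Y Z _ lZ dZ sZ.
- apply: (@generic_AGR R R Y id _ _ Z lZ dZ sZ) => //.
  by move=> t; exact: cvg_id.
- apply: (@generic_AGR R (RCK R) Y (@RC R) _ _ Z lZ dZ sZ).
    by move=> a b [].
  exact: RC_cont.
Qed.
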